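(* Let $\mathbf L=(L,\vee,\wedge,0,1)$ be a complemented lattice with $0\ne1$ and $a,b,c\in L$. Then: (i) $0\odot a=a\odot0=\{0\}$; (ii) $1\odot a=a\odot1=\{a\}$; (iii) $\{a\wedge b\}\le a\odot b\le\{b\}$, and if $b\le a$ then $a\odot b=\{b\}$; (iv) if $a\le b$ then $a\odot c\le_i b\odot c$ for $i=1,2$; (v) if $\mathbf L$ is modular, then $a\le b$ if and only if $a\odot b=\{a\}$, and moreover $(a\odot b)\odot b=a\odot b$.
   Context: For $a\in L$, $a^+:=\{x\in L\mid a\vee x=1,\ a\wedge x=0\}$ (the set of all complements of $a$); for $B\subseteq L$, $B^+:=\{x\in L\mid b\vee x=1\text{ and }b\wedge x=0\text{ for all }b\in B\}$. For $A,B\subseteq L$: $A\vee B:=\{x\vee y\mid x\in A,y\in B\}$, $A\wedge B:=\{x\wedge y\mid x\in A,y\in B\}$; $A\le B$ means $x\le y$ for all $x\in A,y\in B$; $A\le_1B$ means for every $x\in A$ there is $y\in B$ with $x\le y$; $A\le_2B$ means for every $y\in B$ there is $x\in A$ with $x\le y$. Singletons are identified with their elements. Define $a\odot b:=\{b\}\wedge(\{a\}\vee b^+)=\{b\wedge(a\vee x)\mid x\in b^+\}$ and, for $A,B\subseteq L$, $A\odot B:=B\wedge(A\vee B^+)$. *)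

(* Defs.v *)
From HB Require Import structures.
From mathcomp Require Import all_boot all_order.
From mathcomp Require Import classical_sets.
Set Implicit Arguments. Unset Strict Implicit. Unset Printing Implicit Defensive.
Import Order.Theory.
Local Open Scope order_scope.

Section LatticeSets.
Context {d : Order.disp_t} {L : tbLatticeType d}.

Definition compl_set (b : L) : set L :=
  fun x => b `|` x = \top /\ b `&` x = \bot.

Definition compl_setB (B : set L) : set L :=
  fun x => forall b, B b -> b `|` x = \top /\ b `&` x = \bot.

Definition set_join (A B : set L) : set L :=
  fun z => exists x y, A x /\ B y /\ z = x `|` y.
Definition set_meet (A B : set L) : set L :=
  fun z => exists x y, A x /\ B y /\ z = x `&` y.

Definition set_le (A B : set L) : Prop := forall x y, A x -> B y -> x <= y.
Definition set_le1 (A B : set L) : Prop := forall x, A x -> exists y, B y /\ x <= y.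
Definition set_le2 (A B : set L) : Prop := forall y, B y -> exists x, A x /\ x <= y.

Definition set_odot (A B : set L) : set L := set_meet B (set_join A (compl_setB B)).

(* a (.) b := {b} /\ ({a} \/ b^+), singletons identified with elements *)
Definition odot (a b : L) : set L := set_meet [set b] (set_join [set a] (compl_set b)).

End LatticeSets.

Definition complemented {d : Order.disp_t} (L : tbLatticeType d) : Prop :=
  forall a : L, exists x : L, a `|` x = \top /\ a `&` x = \bot.

Definition modular {d : Order.disp_t} (L : tbLatticeType d) : Prop :=
  forall a b c : L, a <= c -> a `|` (b `&` c) = (a `|` b) `&` c.

(* Main.v *)
Require Import Defs.
From HB Require Import structures.
From mathcomp Require Import all_boot all_order.
From mathcomp Require Import classical_sets.
Import Order.Theory.
Local Open Scope order_scope.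

Section H.
Context {d : Order.disp_t} {L : tbLatticeType d}.

Lemma odotP (a b z : L) :
  odot a b z <-> exists x, (b `|` x = \top /\ b `&` x = \bot) /\ z = b `&` (a `|` x).
Proof.
split.
- move=> [u [v [Hu [[a' [x [Ha [Hx ->]]]] ->]]]].
  rewrite /= in Hu Ha; subst; exists x; split => //.
- move=> [x [Hx ->]]; exists b, (a `|` x); split => //; split => //.
  exists a, x; split => //.
Qed.

Lemma set_ext (A B : set L) : (forall z, A z <-> B z) -> A = B.
Proof. move=> H; apply/seteqP; split => z /H //. Qed.

End H.

Theorem proposition6 (d : Order.disp_t) (L : tbLatticeType d)
  (hcomp : complemented L) (h01 : (\bot : L) <> \top) (a b c : L) :
  (* (i) *)
  (odot \bot a = [set \bot]%classic /\ odot a \bot = [set \bot]%classic) /\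
  (* (ii) *)
  (odot \top a = [set a]%classic /\ odot a \top = [set a]%classic) /\
  (* (iii) *)
  (set_le [set (a `&` b)%O]%classic (odot a b) /\ set_le (odot a b) [set b]%classic /\
   (b <= a -> odot a b = [set b]%classic)) /\
  (* (iv) *)
  (a <= b -> set_le1 (odot a c) (odot b c) /\ set_le2 (odot a c) (odot b c)) /\
  (* (v) *)
  (modular L ->
     (a <= b <-> odot a b = [set a]%classic) /\
     set_odot (odot a b) [set b]%classic = odot a b).
Proof.
have nonempty : forall u v : L, exists z, odot u v z.
  move=> u v; have [x Hx] := hcomp v; exists (v `&` (u `|` x)); apply/odotP; by exists x.
split; [split|split; [split|split; [split; [|split]|split]]].
- apply: set_ext => z; rewrite odotP; split.
  + by move=> [x [[_ H2] ->]]; rewrite join0x H2.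
  + move=> /= ->; have [x Hx] := hcomp a; exists x; split => //; by rewrite join0x Hx.2.
- apply: set_ext => z; rewrite odotP; split.
  + by move=> [x [_ ->]]; rewrite meet0x.
  + move=> /= ->; exists \top; split; first by rewrite join0x meet0x.
    by rewrite meet0x.
- apply: set_ext => z; rewrite odotP; split.
  + by move=> [x [_ ->]]; rewrite join1x meetx1.
  + move=> /= ->; have [x Hx] := hcomp a; exists x; split => //; by rewrite join1x meetx1.
- apply: set_ext => z; rewrite odotP; split.
  + move=> [x [[_ H2] ->]]; rewrite meet1x in H2; by rewrite H2 joinx0 meet1x.
  + move=> /= ->; exists \bot; split; first by rewrite joinx0 meetx0.
    by rewrite joinx0 meet1x.
- move=> x y /= -> /odotP [z [_ ->]].
  rewrite lexI leIr /=; exact: le_trans (leIl _ _) (leUl _ _).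
- move=> x y /odotP [z [_ ->]] /= ->; exact: leIl.
- move=> hba; apply: set_ext => z; rewrite odotP; split.
  + move=> [x [_ ->]] /=; apply/meet_l; exact: le_trans hba (leUl _ _).
  + move=> /= ->; have [x Hx] := hcomp b; exists x; split => //.
    apply/esym/meet_l; exact: le_trans hba (leUl _ _).
- move=> hab; split.
  + move=> x /odotP [z [Hz ->]]; exists (c `&` (b `|` z)); split.
      by apply/odotP; exists z.
    by rewrite leI2 // leU2.
  + move=> y /odotP [z [Hz ->]]; exists (c `&` (a `|` z)); split.
      by apply/odotP; exists z.
    by rewrite leI2 // leU2.
- move=> hmod.
  have key : forall y x : L, y <= b -> b `&` x = \bot -> b `&` (y `|` x) = y.
    move=> y x hy hx; rewrite meetC -hmod // meetC hx joinx0 //.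
  split; first split.
  + move=> hab; apply: set_ext => z; rewrite odotP; split.
      by move=> [x [Hx ->]]; rewrite key //; case: Hx.
    move=> /= ->; have [x Hx] := hcomp b; exists x; split => //.
    by rewrite key //; case: Hx.
  + move=> E; have [z Hz] := nonempty a b.
    have := Hz; rewrite E /= => Hza; subst z.
    move/odotP: Hz => [x [_ ->]]; exact: leIl.
  + apply: set_ext => z; split.
    * move=> [u [v [Hu [[y [x [Hy [Hx ->]]]] ->]]]].
      rewrite /= in Hu; subst u.
      have Hx' := Hx b erefl.
      rewrite key //; last by case: Hx'.
      by move/odotP: Hy => [w [_ ->]]; exact: leIl.
    * move=> Hz; have := Hz; move/odotP => [x [Hx Ez]].
      exists b, (z `|` x); split => //; split.
        exists z, x; split => //; split => //.
        by move=> b' /= ->.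
      rewrite key //; [by rewrite Ez leIl | by case: Hx].
Qed.
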